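(* Let $\{x^k\}$ be generated by Algorithm IRG with the backtracking stepsize rule and $\theta<\mu$. Assume $\rho_k\to0$, that $\{x^k\}$ has an accumulation point $\bar x$, and that $f$ satisfies the KL property at $\bar x$. Then $\bar x$ is a stationary point of $f$ and $x^k\to\bar x$ as $k\to\infty$.
   Context: Algorithm IRG (general inexact reduced gradient framework). Let $f:\mathbb R^n\to\mathbb R$ be continuously differentiable. Parameters: initial point $x^1\in\mathbb R^n$, initial radii $\varepsilon_1>0$, $r_1>0$, reduction factors $\mu,\theta\in(0,1)$, and a sequence $\{\rho_k\}$ of positive numbers. For $k=1,2,\dots$: (1) choose $g^k\in\mathbb R^n$ with $\|g^k-\nabla f(x^k)\|\le\min\{\varepsilon_k,\rho_k\}$; (2) if $\|g^k\|\le r_k+\varepsilon_k$, set $r_{k+1}=\mu r_k$, $\varepsilon_{k+1}=\theta\varepsilon_k$, $d^k=0$; otherwise set $r_{k+1}=r_k$, $\varepsilon_{k+1}=\varepsilon_k$ and $d^k=-\frac{\|g^k\|-\varepsilon_k}{\|g^k\|}g^k$; (3) choose a stepsize $t_k>0$ by some rule; (4) set $x^{k+1}=x^k+t_kd^k$. Backtracking stepsize rule: fix $\beta,\gamma,\tau\in(0,1)$; if $d^k=0$ set $t_k=\tau$; otherwise $t_k=\max\{t\in\{1,\gamma,\gamma^2,\dots\}: f(x^k+td^k)\le f(x^k)-\beta t\|d^k\|^2\}$. KL property: $f$ satisfies the KL property at $\bar x$ if there exist $\eta>0$, a neighborhood $U$ of $\bar x$, and a nondecreasing function $\psi:(0,\eta)\to(0,\infty)$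 such that $1/\psi$ is integrable over $(0,\eta)$ and $\|\nabla f(x)\|\ge\psi(f(x)-f(\bar x))$ for all $x\in U$ with $f(\bar x)<f(x)<f(\bar x)+\eta$. *)

(* Defs.v *)
(* R^n is represented by row vectors 'rV[R]_n. *)
From HB Require Import structures.
From mathcomp Require Import all_boot all_order all_algebra.
From mathcomp Require Import all_classical all_reals all_analysis.
Set Implicit Arguments. Unset Strict Implicit. Unset Printing Implicit Defensive.
Import Order.TTheory GRing.Theory Num.Theory.
Import numFieldNormedType.Exports.
Local Open Scope classical_set_scope.
Local Open Scope ring_scope.

(* Euclidean norm on R^n (the library's norm on matrices is the max-norm). *)
Definition enorm {R : realType} {n : nat} (v : 'rV[R]_n) : R :=
  Num.sqrt (\sum_(i < n) v 0 i ^+ 2).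

Definition grad {R : realType} {n : nat} (f : 'rV[R]_n -> R) (x : 'rV[R]_n)
  : 'rV[R]_n := \row_(i < n) ('D_(delta_mx 0 i) f x).

Definition C1 {R : realType} {n : nat} (f : 'rV[R]_n -> R) : Prop :=
  (forall x, differentiable f x) /\ continuous (grad f).

Definition KL_at {R : realType} {n : nat} (f : 'rV[R]_n -> R) (xbar : 'rV[R]_n)
  : Prop :=
  exists (eta : R) (U : set 'rV[R]_n) (psi : R -> R),
    [/\ 0 < eta, nbhs xbar U &
     [/\ {in (`]0, eta[) &, {homo psi : s t / s <= t}},
        (forall t, 0 < t < eta -> 0 < psi t),
        (lebesgue_measure).-integrable (`]0, eta[)
            (fun t => ((psi t)^-1)%:E) &
        (forall x, U x -> f xbar < f x < f xbar + eta ->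
           psi (f x - f xbar) <= enorm (grad f x))]].

Definition armijo {R : realType} {n : nat} (f : 'rV[R]_n -> R) (beta : R)
  (x d : 'rV[R]_n) (t : R) : Prop :=
  f (x + t *: d) <= f x - beta * t * (enorm d ^+ 2).

(* Indices are shifted: index 0 here is k = 1
   in the paper (x 0 = x^1, eps 0 = eps_1, r 0 = r_1). *)
Definition IRG_backtracking {R : realType} {n : nat} (f : 'rV[R]_n -> R)
  (mu theta beta gamma tau : R) (rho : nat -> R)
  (x g d : nat -> 'rV[R]_n) (eps r t : nat -> R) : Prop :=
  [/\ 0 < eps 0, 0 < r 0 &
   forall k,
   [/\ enorm (g k - grad f (x k)) <= Num.min (eps k) (rho k),
       (if enorm (g k) <= r k + eps k then
          [/\ r k.+1 = mu * r k, eps k.+1 = theta * eps k & d k = 0]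
        else
          [/\ r k.+1 = r k, eps k.+1 = eps k &
              d k = - ((enorm (g k) - eps k) / enorm (g k)) *: g k]),
       (if d k == 0 then t k = tau
        else exists j : nat,
          [/\ t k = gamma ^+ j, armijo f beta (x k) (d k) (gamma ^+ j) &
              forall i, (i < j)%N -> ~ armijo f beta (x k) (d k) (gamma ^+ i)]) &
       x k.+1 = x k + t k *: d k]].

Definition accumulation_point {R : realType} {n : nat} (x : nat -> 'rV[R]_n)
  (xbar : 'rV[R]_n) : Prop :=
  forall U, nbhs xbar U -> forall N, exists k, (N <= k)%N /\ U (x k).

(* Main.v *)
From HB Require Import structures.
From mathcomp Require Import all_boot all_order all_algebra.
From mathcomp Require Import all_classical all_reals all_analysis.
From mathcomp Require Import ring lra.
Require Import Defs.
Set Implicit Arguments. Unset Strict Implicit. Unset Printing Implicit Defensive.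
Import Order.TTheory GRing.Theory Num.Theory.
Import numFieldNormedType.Exports.
Local Open Scope classical_set_scope.
Local Open Scope ring_scope.


Section Vec.
Context {R : realType} {n : nat}.
Implicit Types u v w : 'rV[R]_n.

Definition dot u v : R := \sum_(i < n) u 0 i * v 0 i.

Lemma dotC u v : dot u v = dot v u.
Proof. by apply: eq_bigr => i _; rewrite mulrC. Qed.

Lemma dotDl u v w : dot (u + v) w = dot u w + dot v w.
Proof. by rewrite /dot -big_split; apply: eq_bigr => i _; rewrite mxE mulrDl. Qed.

Lemma dotZl a u w : dot (a *: u) w = a * dot u w.
Proof. by rewrite /dot mulr_sumr; apply: eq_bigr => i _; rewrite mxE mulrA. Qed.

Lemma dotNl u w : dot (- u) w = - dot u w.
Proof. by rewrite -scaleN1r dotZl mulN1r. Qed.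

Lemma dotBl u v w : dot (u - v) w = dot u w - dot v w.
Proof. by rewrite dotDl dotNl. Qed.

Lemma dotDr u v w : dot w (u + v) = dot w u + dot w v.
Proof. by rewrite dotC dotDl !(dotC w). Qed.

Lemma dotZr a u w : dot w (a *: u) = a * dot w u.
Proof. by rewrite dotC dotZl dotC. Qed.

Lemma dotNr u w : dot w (- u) = - dot w u.
Proof. by rewrite dotC dotNl dotC. Qed.

Lemma dotBr u v w : dot w (u - v) = dot w u - dot w v.
Proof. by rewrite dotDr dotNr. Qed.

Lemma dot_ge0 u : 0 <= dot u u.
Proof. by apply: sumr_ge0 => i _; rewrite -expr2 sqr_ge0. Qed.

Lemma dot0l u : dot 0 u = 0.
Proof. by rewrite /dot big1 // => i _; rewrite mxE mul0r. Qed.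

Lemma dot_eq0 u : dot u u = 0 -> u = 0.
Proof.
move=> /eqP; rewrite psumr_eq0; last by move=> i _; rewrite -expr2 sqr_ge0.
move=> /allP H; apply/rowP => i; rewrite mxE.
have := H i (mem_index_enum i); rewrite /= -expr2 sqrf_eq0 => /eqP ->//.
Qed.

Lemma enormE u : enorm u = Num.sqrt (dot u u).
Proof. by rewrite /enorm /dot; congr Num.sqrt; apply: eq_bigr => i _; rewrite expr2. Qed.

Lemma enorm_ge0 u : 0 <= enorm u.
Proof. by rewrite enormE sqrtr_ge0. Qed.

Lemma enorm_sq u : enorm u ^+ 2 = dot u u.
Proof. by rewrite enormE sqr_sqrtr // dot_ge0. Qed.

Lemma enorm0 : enorm (0 : 'rV[R]_n) = 0.
Proof. by rewrite enormE dot0l sqrtr0. Qed.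

Lemma enorm_eq0 u : enorm u = 0 -> u = 0.
Proof.
move=> h; apply: dot_eq0; by rewrite -enorm_sq h expr0n.
Qed.

Lemma CS u v : dot u v <= enorm u * enorm v.
Proof.
have [v0|vn0] := eqVneq (dot v v) 0.
  rewrite (dot_eq0 v0) dotC dot0l enorm0 mulr0 //.
have C0 : 0 < dot v v by rewrite lt_def vn0 dot_ge0.
set A := dot u u; set B := dot u v; set C := dot v v.
have key : 0 <= A - B ^+ 2 / C.
  have := dot_ge0 (u - (B / C) *: v).
  rewrite !(dotBl, dotBr, dotZl, dotZr) -/A -/B -/C (dotC v u) -/B.
  idtac.
  match goal with |- is_true (0 <= ?X) -> _ => have -> : X = A - B ^+ 2 / C end; last by [].
  by field; rewrite gt_eqF.
have h2 : B ^+ 2 <= A * C.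
  by rewrite subr_ge0 ler_pdivrMr // in key.
have : B ^+ 2 <= (enorm u * enorm v) ^+ 2 by rewrite exprMn !enorm_sq.
move=> h; have [Bn|Bp] := ltP B 0.
  by apply: le_trans (ltW Bn) _; rewrite mulr_ge0 // enorm_ge0.
by rewrite -(@ler_pXn2r _ 2) // ?nnegrE // mulr_ge0 // enorm_ge0.
Qed.


Lemma enormZ a u : enorm (a *: u) = `|a| * enorm u.
Proof.
rewrite !enormE dotZl dotZr mulrA -expr2 sqrtrM ?sqr_ge0 //.
by rewrite sqrtr_sqr.
Qed.

Lemma enormN u : enorm (- u) = enorm u.
Proof. by rewrite -scaleN1r enormZ normrN normr1 mul1r. Qed.

Lemma enormB_sym u v : enorm (u - v) = enorm (v - u).
Proof. by rewrite -enormN opprB. Qed.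

Lemma enormD u v : enorm (u + v) <= enorm u + enorm v.
Proof.
rewrite -(@ler_pXn2r _ 2) // ?nnegrE ?addr_ge0 ?enorm_ge0 //.
rewrite enorm_sq sqrrD !enorm_sq dotDl !dotDr (dotC v u).
have := CS u v; lra.
Qed.

Lemma enormB u v : enorm (u - v) <= enorm u + enorm v.
Proof. by apply: le_trans (enormD _ _) _; rewrite enormN. Qed.

Lemma enorm_tri u v w : enorm (u - w) <= enorm (u - v) + enorm (v - w).
Proof. by have := enormD (u - v) (v - w); rewrite addrA subrK. Qed.

Lemma enorm_lipschitz u v : `|enorm u - enorm v| <= enorm (u - v).
Proof.
rewrite ler_norml; apply/andP; split.
  have := enormD (v - u) u; rewrite subrK enormB_sym; lra.
have := enormD (u - v) v; rewrite subrK; lra.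
Qed.

Lemma entry_le_enorm u (i : 'I_n) : `|u 0 i| <= enorm u.
Proof.
rewrite /enorm -sqrtr_sqr; apply: ler_wsqrtr.
rewrite (bigD1 i) //= lerDl; apply: sumr_ge0 => j _; exact: sqr_ge0.
Qed.

Lemma entry_le_mxnorm u (i : 'I_n) : `|u 0 i| <= `|u|.
Proof.
rewrite (_ : `|u| = mx_norm u) // mx_normrE; apply/bigmax_geP; right => /=.
by exists (0, i).
Qed.

Lemma mxnorm_le u c : 0 <= c -> (forall i, `|u 0 i| <= c) -> `|u| <= c.
Proof.
move=> c0 H; rewrite (_ : `|u| = mx_norm u) // mx_normrE; apply/bigmax_leP; split => //.
by move=> [a b] _ /=; rewrite (ord1 a); exact: H.
Qed.

Lemma mxnorm_le_enorm u : `|u| <= enorm u.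
Proof. by apply: mxnorm_le; [exact: enorm_ge0| exact: entry_le_enorm]. Qed.

Lemma enorm_le_mxnorm u : enorm u <= Num.sqrt n%:R * `|u|.
Proof.
rewrite -[X in _ * X]ger0_norm // -sqrtr_sqr -sqrtrM ?ler0n //.
apply: ler_wsqrtr.
rewrite -[n in n%:R]card_ord -sumr_const.
rewrite mulr_suml; apply: ler_sum => i _; rewrite mul1r -real_normK ?num_real //.
by rewrite lerXn2r // ?nnegrE // entry_le_mxnorm.
Qed.

End Vec.


Section Der.
Context {R : realType} {n : nat}.
Implicit Types u v w x d : 'rV[R]_n.

Lemma derive_dot (f : 'rV[R]_n -> R) a d : differentiable f a ->
  'D_d f a = dot (grad f a) d.
Proof.
move=> df; rewrite deriveE // {1}(row_sum_delta d) linear_sum /dot.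
apply: eq_bigr => i _; rewrite linearZ /= /grad mxE deriveE // mulrC.
by [].
Qed.

Lemma line_is_derive (f : 'rV[R]_n -> R) x d (u : R) :
  differentiable f (x + u *: d) ->
  is_derive u 1 (fun s => f (x + s *: d)) (dot (grad f (x + u *: d)) d).
Proof.
move=> df.
have E : (fun h : R => h^-1 *: (((fun s => f (x + s *: d)) \o shift u) (h *: 1)
              - (fun s => f (x + s *: d)) u)) =
         (fun h : R => h^-1 *: ((f \o shift (x + u *: d)) (h *: d) - f (x + u *: d))).
  apply/funext => h /=; congr (_ *: (f _ - _)).
  by rewrite /shift /= scalerDl -[h%:A]/(h * 1) mulr1 addrA [_ + h *: d]addrC addrA.
split; first by rewrite /derivable E; exact: diff_derivable.
by rewrite /derive E -derive_dot.
Qed.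


Lemma line_mvt (f : 'rV[R]_n -> R) x d (s : R) :
  (forall y, differentiable f y) -> 0 < s ->
  exists2 u, 0 < u < s & f (x + s *: d) - f x = s * dot (grad f (x + u *: d)) d.
Proof.
move=> df s0.
have hd (u : R) : is_derive u 1 (fun s => f (x + s *: d)) (dot (grad f (x + u *: d)) d).
  exact: line_is_derive.
have cont : {within `[0, s], continuous (fun s => f (x + s *: d))}.
  apply: continuous_subspaceT => u0.
  apply: differentiable_continuous; apply/derivable1_diffP.
  exact: (@ex_derive _ _ _ _ _ _ _ (hd u0)).
have [c cin E] := @MVT R (fun s => f (x + s *: d))
   (fun u : R => dot (grad f (x + u *: d)) d) 0 s s0 (fun (u : R) _ => hd u) cont.
exists c; first by rewrite in_itv /= in cin.
by move: E; rewrite scale0r addr0 subr0 mulrC.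
Qed.

End Der.


Section Top.
Context {R : realType} {n : nat}.
Implicit Types u v y z : 'rV[R]_n.

Lemma near_enorm z (P : 'rV[R]_n -> Prop) : nbhs z P ->
  exists2 del, 0 < del & forall y, enorm (y - z) < del -> P y.
Proof.
move=> /nbhs_ballP [e e0 He]; exists e => // y hy; apply: He.
rewrite -ball_normE /ball_ /=.
by apply: le_lt_trans (mxnorm_le_enorm _) _; rewrite enormB_sym.
Qed.

Lemma enorm_nbhs z (c : R) : 0 < c -> nbhs z [set y | enorm (y - z) < c].
Proof.
move=> c0; apply/nbhs_ballP.
have s0 : 0 < Num.sqrt (n%:R : R) + 1 by have := sqrtr_ge0 (n%:R : R); lra.
exists (c / (Num.sqrt n%:R + 1)); first by apply: divr_gt0.
move=> y; rewrite -ball_normE /ball_ /= => hy.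
apply: le_lt_trans (enorm_le_mxnorm _) _.
rewrite -normrN opprB.
apply: (@le_lt_trans _ _ ((Num.sqrt n%:R + 1) * `|z - y|)).
  by rewrite ler_wpM2r // lerDl.
by rewrite mulrC -ltr_pdivlMr.
Qed.

Lemma cont_enorm (F : 'rV[R]_n -> 'rV[R]_n) z : F @ z --> F z ->
  forall e, 0 < e -> exists2 del, 0 < del &
    forall y, enorm (y - z) < del -> enorm (F y - F z) < e.
Proof.
move=> cF e e0.
have s0 : 0 < Num.sqrt (n%:R : R) + 1 by have := sqrtr_ge0 (n%:R : R); lra.
have /cvgrPdist_lt /(_ (e / (Num.sqrt n%:R + 1))) := cF.
move=> /(_ (divr_gt0 e0 s0)) /near_enorm [del del0 H].
exists del => // y /H hy.
apply: le_lt_trans (enorm_le_mxnorm _) _.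
rewrite -normrN opprB.
apply: (@le_lt_trans _ _ ((Num.sqrt n%:R + 1) * `|F z - F y|)).
  by rewrite ler_wpM2r // lerDl.
by rewrite mulrC -ltr_pdivlMr.
Qed.

Lemma cont_real (F : 'rV[R]_n -> R) z : F @ z --> F z ->
  forall e, 0 < e -> exists2 del, 0 < del &
    forall y, enorm (y - z) < del -> `|F z - F y| < e.
Proof.
move=> cF e e0.
by have /cvgrPdist_lt /(_ e e0) /near_enorm := cF.
Qed.

End Top.


Section KLint.
Context {R : realType} (psi : R -> R) (eta : R).
Hypotheses (eta0 : 0 < eta)
  (mono : {in `]0, eta[ &, {homo psi : s t / s <= t}})
  (pos : forall t, 0 < t < eta -> 0 < psi t)
  (intg : (@lebesgue_measure R).-integrable (`]0, eta[) (fun t => ((psi t)^-1)%:E)).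

Notation mu := (@lebesgue_measure R).
Let h := fun t => (psi t)^-1.

Definition Phi (s : R) : R := \int[mu]_(t in `]0, s]) (psi t)^-1.

Lemma Phi_int s : s < eta -> mu.-integrable `]0, s] (EFin \o h).
Proof.
move=> se; apply: integrableS intg => //.
move=> t /=; rewrite !in_itv /= => /andP[t0 ts]; rewrite t0 /=.
exact: le_lt_trans ts se.
Qed.

Lemma Phi_ge0 s : s < eta -> 0 <= Phi s.
Proof.
move=> se; apply: Rintegral_ge0 => t /=; rewrite in_itv /= => /andP[t0 ts].
by rewrite invr_ge0 ltW // pos // t0 (le_lt_trans ts se).
Qed.

Lemma Phi_diff a b : 0 <= b -> b <= a -> a < eta -> 0 < a ->
  (a - b) / psi a <= Phi a - Phi b.
Proof.
move=> b0 ba ae a0.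
rewrite /Phi (@Rintegral_itvB _ h (BRight 0) (BRight a) b); last 3 first.
- exact: Phi_int.
- by rewrite bnd_simp.
- by rewrite bnd_simp.
have mi : measurable [set` Interval (BRight b) (BRight a)] by [].
have -> : (a - b) / psi a = \int[mu]_(t in `]b, a]) (psi a)^-1.
  rewrite Rintegral_cst //.
  have := @lebesgue_measure_itv R (Interval (BRight b) (BRight a)).
  move=> /= ->; rewrite lte_fin.
  case: ltP => [ba'|ab]; first by rewrite /= mulrC.
  have -> : a = b by apply/eqP; rewrite eq_le ba ab.
  by rewrite subrr mul0r mulr0.
apply: le_Rintegral => //.
- apply: measurable_bounded_integrable => //.
    have := @lebesgue_measure_itv R (Interval (BRight b) (BRight a)).
    by move=> /= ->; case: ifP => _; rewrite ?ltry.
  exact: bounded_cst.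
- apply: integrableS (Phi_int ae) => //.
  move=> t /=; rewrite !in_itv /= => /andP[bt ->]; rewrite andbT.
  exact: le_lt_trans bt.
- move=> t /=; rewrite in_itv /= => /andP[bt ta].
  have t0 : 0 < t by exact: le_lt_trans bt.
  rewrite lef_pV2 ?posrE ?pos ?a0 ?ae ?t0 ?(le_lt_trans ta ae) //.
  by apply: mono; rewrite ?in_itv /= ?a0 ?ae ?t0 ?(le_lt_trans ta ae).
Qed.

Lemma Phi_mono a b : 0 <= b -> b <= a -> a < eta -> Phi b <= Phi a.
Proof.
move=> b0 ba ae; case: (ltP 0 a) => a0.
  have := Phi_diff b0 ba ae a0.
  have : 0 <= (a - b) / psi a by rewrite divr_ge0 ?subr_ge0 // ltW // pos // a0 ae.
  lra.
have -> : b = a by apply/eqP; rewrite eq_le ba; apply: le_trans a0 b0.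
by [].
Qed.

Lemma Phi_small e : 0 < e -> exists2 del, 0 < del &
  forall s, 0 <= s -> s < del -> s < eta -> Phi s < e.
Proof.
move=> e0.
have i2 : mu.-integrable setT (EFin \o (h \_ `]0, eta[)).
  by rewrite -restrict_EFin -integrable_mkcond.
have [del [del0 H]] := integral_normr_continuous i2 e0.
exists del => // s s0 sd se.
pose I : set R := [set` `]0, s]].
have Hm : (mu I < del%:E)%E.
  have := @lebesgue_measure_itv R (Interval (BRight 0) (BRight s)).
  move=> /= ->; rewrite lte_fin.
  case: ifP => _; last by rewrite lte_fin.
  by rewrite -EFinD lte_fin subr0.
have := H I (measurable_itv _) Hm.
apply: le_lt_trans; rewrite le_eqVlt; apply/orP; left; apply/eqP.
apply: eq_Rintegral => t; rewrite inE /= in_itv /= => /andP[t0 ts].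
have te : t < eta by exact: le_lt_trans ts se.
rewrite patchE ifT; last by rewrite inE /= in_itv /= t0 te.
by rewrite gtr0_norm // invr_gt0 pos // t0 te.
Qed.

End KLint.


Section Alg.
Context {R : realType} {n : nat} (f : 'rV[R]_n -> R)
  (mu theta beta gamma tau : R) (rho : nat -> R)
  (x g d : nat -> 'rV[R]_n) (eps r t : nat -> R).
Hypotheses (fC1 : C1 f) (hmu : 0 < mu < 1) (hth : 0 < theta < 1)
  (thmu : theta < mu) (hbeta : 0 < beta < 1) (hgamma : 0 < gamma < 1)
  (htau : 0 < tau < 1)
  (alg : IRG_backtracking f mu theta beta gamma tau rho x g d eps r t).

Definition null k := enorm (g k) <= r k + eps k.

Lemma step k : [/\ enorm (g k - grad f (x k)) <= Num.min (eps k) (rho k),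
       (if enorm (g k) <= r k + eps k then
          [/\ r k.+1 = mu * r k, eps k.+1 = theta * eps k & d k = 0]
        else
          [/\ r k.+1 = r k, eps k.+1 = eps k &
              d k = - ((enorm (g k) - eps k) / enorm (g k)) *: g k]),
       (if d k == 0 then t k = tau
        else exists j : nat,
          [/\ t k = gamma ^+ j, armijo f beta (x k) (d k) (gamma ^+ j) &
              forall i, (i < j)%N -> ~ armijo f beta (x k) (d k) (gamma ^+ i)]) &
       x k.+1 = x k + t k *: d k].
Proof. by case: alg => _ _ /(_ k). Qed.

Lemma g_close k : enorm (g k - grad f (x k)) <= eps k.
Proof. by case: (step k) => + _ _ _; rewrite le_min => /andP[]. Qed.

Lemma xS k : x k.+1 = x k + t k *: d k.
Proof. by case: (step k). Qed.

Lemma pos_er k : 0 < eps k /\ 0 < r k.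
Proof.
have th0 : 0 < theta by case/andP: hth.
have mu0 : 0 < mu by case/andP: hmu.
case: alg => e0 r0 _; elim: k => [//|k [ek rk]].
case: (step k) => _; case: ifP => _ [-> -> _] _ _; split => //; exact: mulr_gt0.
Qed.

Lemma eps_pos k : 0 < eps k. Proof. by case: (pos_er k). Qed.
Lemma r_pos k : 0 < r k. Proof. by case: (pos_er k). Qed.

Lemma eps_le k : eps k.+1 <= eps k.
Proof.
have := eps_pos k; case: (step k) => _; case: ifP => _ [_ -> _] _ _ //.
by move=> ek; rewrite ger_pMl //; case/andP: hth => _ /ltW.
Qed.

Lemma r_le k : r k.+1 <= r k.
Proof.
have := r_pos k; case: (step k) => _; case: ifP => _ [-> _ _] _ _ //.
by move=> ek; rewrite ger_pMl //; case/andP: hmu => _ /ltW.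
Qed.

Lemma ratio k : eps k * r 0 <= eps 0 * r k.
Proof.
elim: k => [|k IH]; first by [].
have e0 := eps_pos 0; have ek := eps_pos k; have r0 := r_pos 0; have rk := r_pos k.
case: (step k) => _; case: ifP => _ [-> -> _] _ _ //.
have : theta * (eps k * r 0) <= mu * (eps 0 * r k).
  apply: ler_pM => //; [by case/andP: hth => /ltW| | exact: ltW].
  by rewrite mulr_ge0 // ltW.
by rewrite !mulrA [eps 0 * _]mulrC.
Qed.

Lemma null_facts k : null k -> [/\ d k = 0, t k = tau, x k.+1 = x k &
   enorm (grad f (x k)) <= r k + 2 * eps k].
Proof.
rewrite /null => hk; case: (step k) => _; rewrite hk => -[_ _ dk0].
rewrite dk0 eqxx => tk xk; split => //; first by rewrite xk scaler0 addr0.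
have := enormD (g k) (grad f (x k) - g k); rewrite addrC subrK.
rewrite enormB_sym; have := g_close k; lra.
Qed.

Lemma desc_facts k : ~~ null k -> [/\ r k.+1 = r k, eps k.+1 = eps k,
   enorm (d k) = enorm (g k) - eps k, r k < enorm (d k) &
   d k = - ((enorm (g k) - eps k) / enorm (g k)) *: g k].
Proof.
rewrite /null => hk; case: (step k) => _; rewrite (negbTE hk) => -[-> -> dk] _ _.
have ek := eps_pos k; have rk := r_pos k.
have gpos : r k + eps k < enorm (g k) by rewrite ltNge.
have dn : enorm (d k) = enorm (g k) - eps k.
  rewrite dk enormZ normrN ger0_norm; last by rewrite divr_ge0 ?enorm_ge0 //; lra.
  by rewrite divfK //; apply/lt0r_neq0; lra.
split => //; lra.
Qed.

Lemma d_neq0 k : ~~ null k -> d k != 0.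
Proof.
move/desc_facts => [_ _ _ h _]; apply/eqP => d0; move: h; rewrite d0 enorm0.
by have := r_pos k; lra.
Qed.

Lemma t_pos k : 0 < t k.
Proof.
case: (step k) => _ _; case: ifP => _; first by move=> ->; case/andP: htau.
by move=> [j [-> _ _]] _; rewrite exprn_gt0 //; case/andP: hgamma.
Qed.

Lemma descent k : f (x k.+1) <= f (x k) - beta * t k * enorm (d k) ^+ 2.
Proof.
case: (step k) => _ _; case: ifP => [/eqP d0|_].
  by move=> _ ->; rewrite d0 scaler0 addr0 enorm0 expr0n /= mulr0 subr0.
by move=> [j [-> + _]] ->.
Qed.


Lemma desc_dir k : ~~ null k -> dot (grad f (x k)) (d k) <= - enorm (d k) ^+ 2.
Proof.
move=> hk; have [_ _ dn rd dk] := desc_facts hk.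
have ek := eps_pos k; have rk := r_pos k.
have gpos : r k + eps k < enorm (g k) by rewrite ltNge.
rewrite -[grad f (x k)](subrK (g k)) dotDl.
have h1 : dot (grad f (x k) - g k) (d k) <= eps k * enorm (d k).
  apply: le_trans (CS _ _) _; rewrite ler_wpM2r ?enorm_ge0 //.
  by rewrite enormB_sym g_close.
have h2 : dot (g k) (d k) = - ((enorm (g k) - eps k) * enorm (g k)).
  rewrite dk dotZr -enorm_sq; field.
  by apply/lt0r_neq0; lra.
rewrite h2 dn; move: h1; rewrite dn; nra.
Qed.

Definition C0 := 1 + 2 * (eps 0 / r 0).

Lemma C0_pos : 1 <= C0.
Proof.
rewrite /C0 lerDl; apply: mulr_ge0 => //; apply: divr_ge0; apply: ltW.
exact: eps_pos. exact: r_pos.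
Qed.

Lemma grad_bound k : ~~ null k -> enorm (grad f (x k)) <= C0 * enorm (d k).
Proof.
move=> hk; have [_ _ dn rd dk] := desc_facts hk.
have ek := eps_pos k; have rk := r_pos k; have e0 := eps_pos 0; have r0 := r_pos 0.
have h0 : enorm (grad f (x k)) <= enorm (g k) + eps k.
  have := enormD (g k) (grad f (x k) - g k); rewrite addrC subrK.
  rewrite enormB_sym; have := g_close k; lra.
have h1 : eps k <= eps 0 / r 0 * enorm (d k).
  rewrite mulrAC ler_pdivlMr //.
  apply: le_trans (ratio k) _; rewrite ler_wpM2l //; [exact: ltW| exact: ltW].
rewrite /C0; lra.
Qed.

Lemma f_step k : f (x k.+1) <= f (x k).
Proof.
apply: le_trans (descent k) _; rewrite lerBlDr lerDl.
by rewrite mulr_ge0 ?sqr_ge0 // mulr_ge0 ?(ltW (t_pos k)) //; case/andP: hbeta => /ltW.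
Qed.

Lemma f_noninc k m : (k <= m)%N -> f (x m) <= f (x k).
Proof.
move=> /subnK <-; elim: (m - k)%N => [|i IH]; first by rewrite add0n.
by rewrite addSn; apply: le_trans (f_step _) IH.
Qed.

Lemma f_cont z : f @ z --> f z.
Proof. by apply: differentiable_continuous; case: fC1. Qed.

Lemma grad_cont z : grad f @ z --> grad f z.
Proof. by case: fC1 => _; exact. Qed.

Variable xbar : 'rV[R]_n.
Hypothesis acc : accumulation_point x xbar.

Lemma f_ge k : f xbar <= f (x k).
Proof.
rewrite leNgt; apply/negP => fk.
have e0 : 0 < f xbar - f (x k) by rewrite subr_gt0.
have [del del0 H] := cont_real (@f_cont xbar) e0.
have [m [km Um]] := acc (enorm_nbhs xbar del0) k.
have := H _ Um; have := f_noninc km.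
rewrite ltr_norml; lra.
Qed.

Lemma f_lim e : 0 < e -> exists N, forall m, (N <= m)%N -> f (x m) - f xbar < e.
Proof.
move=> e0; have [del del0 H] := cont_real (@f_cont xbar) e0.
have [K [_ UK]] := acc (enorm_nbhs xbar del0) 0.
exists K => m Km; have := H _ UK; have := f_noninc Km; rewrite ltr_norml; lra.
Qed.


Section KLpart.
Variables (eta : R) (U : set 'rV[R]_n) (psi : R -> R).
Hypotheses (eta0 : 0 < eta)
  (mono : {in `]0, eta[ &, {homo psi : s t / s <= t}})
  (pos : forall t, 0 < t < eta -> 0 < psi t)
  (intg : (@lebesgue_measure R).-integrable (`]0, eta[) (fun t => ((psi t)^-1)%:E))
  (klU : forall y, U y -> f xbar < f y < f xbar + eta ->
           psi (f y - f xbar) <= enorm (grad f y)).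

Let a m := f (x m) - f xbar.
Let Cc := C0 / beta.

Lemma a_ge0 m : 0 <= a m.
Proof. by rewrite /a subr_ge0 f_ge. Qed.

Lemma a_le m : a m.+1 <= a m.
Proof. by rewrite /a lerD2r f_step. Qed.

Lemma Cc_pos : 0 < Cc.
Proof.
by rewrite /Cc divr_gt0 //; [exact: lt_le_trans ltr01 C0_pos| case/andP: hbeta].
Qed.

Lemma one_step m : U (x m) -> a m < eta ->
  enorm (x m.+1 - x m) <= Cc * (Phi psi (a m) - Phi psi (a m.+1)).
Proof.
move=> Um am.
have PM := Phi_mono mono pos intg (a_ge0 m.+1) (a_le m) am.
have Cc0 := Cc_pos.
rewrite xS addrC addKr enormZ gtr0_norm ?t_pos //.
have [hk|hk] := boolP (null m).
  have [-> _ _ _] := null_facts hk; rewrite enorm0 mulr0.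
  by apply: mulr_ge0; [exact: ltW| rewrite subr_ge0].
have [_ _ dn rd _] := desc_facts hk.
have D0 : 0 < enorm (d m) by have := r_pos m; lra.
have T0 := t_pos m.
have b0 : 0 < beta by case/andP: hbeta.
have desc := descent m.
have Q : 0 < beta * t m * enorm (d m) ^+ 2.
  by rewrite mulr_gt0 ?exprn_gt0 // mulr_gt0.
have am0 : 0 < a m.
  have := a_ge0 m.+1; move: desc; rewrite /a; lra.
have fm : f xbar < f (x m) < f xbar + eta.
  by move: am am0; rewrite /a; lra.
have kl := klU Um fm.
have gb := grad_bound hk.
have Pp : 0 < psi (a m) by apply: pos; rewrite am0 am.
have PD := Phi_diff mono pos intg (a_ge0 m.+1) (a_le m) am am0.
set P := psi (a m) in kl Pp PD.
set Dl := Phi psi (a m) - Phi psi (a m.+1) in PD *.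
set D := enorm (d m) in dn rd D0 desc Q gb *.
have h1 : a m - a m.+1 <= Dl * P by rewrite -ler_pdivrMr.
have h2 : beta * t m * D ^+ 2 <= a m - a m.+1 by move: desc; rewrite /a; lra.
have Dl0 : 0 <= Dl.
  by apply: le_trans PD; apply: divr_ge0; [rewrite subr_ge0 a_le| exact: ltW].
have h3 : Dl * P <= Dl * (C0 * D) by rewrite ler_wpM2l // (le_trans kl gb).
have h4 : (beta * t m * D) * D <= (Dl * C0) * D.
  rewrite -mulrA -expr2 -mulrA.
  by rewrite mulrA -[Dl * C0 * D]mulrA; apply: le_trans h3; apply: le_trans h1.
rewrite ler_pM2r // in h4.
rewrite /Cc mulrAC ler_pdivlMr //.
have -> : t m * D * beta = beta * t m * D by ring.
by rewrite [C0 * _]mulrC.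
Qed.


Lemma stay (rr : R) K : (forall y, enorm (y - xbar) < rr -> U y) ->
  enorm (x K - xbar) < rr / 2 -> a K < eta -> Cc * Phi psi (a K) < rr / 2 ->
  forall m, (K <= m)%N ->
  enorm (x m - x K) <= Cc * (Phi psi (a K) - Phi psi (a m)) /\
  enorm (x m - xbar) < rr.
Proof.
move=> ballU xK aK CK m /subnK <-; elim: (m - K)%N => [|i [IH1 IH2]].
  rewrite add0n subrr enorm0 subrr mulr0; split => //.
  have := enorm_ge0 (x K - xbar); lra.
have Cc0 := Cc_pos.
have am : a (i + K)%N < eta.
  apply: le_lt_trans aK; rewrite /a lerD2r; apply: f_noninc; exact: leq_addl.
have os := one_step (ballU _ IH2) am.
have P0 : 0 <= Phi psi (a (i + K).+1).
  apply: (Phi_ge0 pos); apply: le_lt_trans am; exact: a_le.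
have h1 : enorm (x (i.+1 + K)%N - x K) <= Cc * (Phi psi (a K) - Phi psi (a (i.+1 + K)%N)).
  rewrite addSn; apply: le_trans (enorm_tri _ (x (i + K)%N) _) _.
  move: os IH1; rewrite !mulrBr; lra.
split => //.
apply: le_lt_trans (enorm_tri _ (x K) _) _.
have : 0 <= Cc * Phi psi (a (i.+1 + K)%N) by apply: mulr_ge0; [exact: ltW | exact: P0].
move: h1 CK xK; rewrite mulrBr; lra.
Qed.


Lemma x_cvg : nbhs xbar U -> x @ \oo --> xbar.
Proof.
move=> nbU; have [r0 r00 ballU] := near_enorm nbU.
apply/cvgrPdist_lt => e e0.
set rr := Num.min e r0.
have rr0 : 0 < rr by rewrite lt_min e0 r00.
have rre : rr <= e by rewrite ge_min lexx.
have ballU' : forall y, enorm (y - xbar) < rr -> U y.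
  by move=> y hy; apply: ballU; apply: lt_le_trans hy _; rewrite ge_min lexx orbT.
have Cc0 := Cc_pos.
have e1 : 0 < rr / 2 / Cc by apply: divr_gt0 => //; apply: divr_gt0.
have [del del0 Hs] := Phi_small pos intg e1.
have e2 : 0 < Num.min eta del by rewrite lt_min eta0 del0.
have [N HN] := f_lim e2.
have e3 : 0 < rr / 2 by apply: divr_gt0.
have [K [NK UK]] := acc (enorm_nbhs xbar e3) N.
have aK : a K < Num.min eta del := HN K NK.
move: aK; rewrite lt_min => /andP[aKe aKd].
have CK : Cc * Phi psi (a K) < rr / 2.
  by rewrite mulrC -ltr_pdivlMr // Hs // a_ge0.
have st := stay ballU' UK aKe CK.
exists K => // m /= Km.
have [_ h] := st m Km.
apply: le_lt_trans (mxnorm_le_enorm _) _; rewrite enormB_sym.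
exact: lt_le_trans h rre.
Qed.

End KLpart.


Lemma eps_noninc k m : (k <= m)%N -> eps m <= eps k /\ r m <= r k.
Proof.
move=> /subnK <-; elim: (m - k)%N => [|i [IH1 IH2]]; first by rewrite add0n.
by rewrite addSn; split; [exact: le_trans (eps_le _) IH1 | exact: le_trans (r_le _) IH2].
Qed.

Section Stat.
Hypothesis xconv : x @ \oo --> xbar.

Lemma x_near del : 0 < del -> exists N, forall m, (N <= m)%N -> enorm (x m - xbar) < del.
Proof.
move=> del0.
have s0 : 0 < Num.sqrt (n%:R : R) + 1 by have := sqrtr_ge0 (n%:R : R); lra.
have e0 : 0 < del / (Num.sqrt (n%:R : R) + 1) by apply: divr_gt0.
have [N _ HN] := (proj1 (cvgrPdist_lt _ _) xconv _ e0).
exists N => m Nm; have := HN m Nm => /= hm.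
apply: le_lt_trans (enorm_le_mxnorm _) _.
rewrite -normrN opprB.
apply: (@le_lt_trans _ _ ((Num.sqrt (n%:R : R) + 1) * `|xbar - x m|)).
  by rewrite ler_wpM2r // lerDl.
by rewrite mulrC -ltr_pdivlMr.
Qed.


Lemma geo (infn : forall N, exists k, (N <= k)%N /\ null k) j :
  exists K, forall k, (K <= k)%N -> eps k <= theta ^+ j * eps 0 /\ r k <= mu ^+ j * r 0.
Proof.
elim: j => [|j [K HK]].
  by exists 0%N => k _; rewrite !expr0 !mul1r; apply: eps_noninc.
have [k [Kk nk]] := infn K.
have [e1 r1] := HK k Kk.
have th0 : 0 < theta by case/andP: hth.
have mu0 : 0 < mu by case/andP: hmu.
case: (step k) => _; move: nk; rewrite /null => -> [rS eS _] _ _.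
exists k.+1 => m km; have [h1 h2] := eps_noninc km.
rewrite !exprS -!mulrA; split.
  by apply: le_trans h1 _; rewrite eS ler_pM2l.
by apply: le_trans h2 _; rewrite rS ler_pM2l.
Qed.

Lemma inf_null (infn : forall N, exists k, (N <= k)%N /\ null k) : grad f xbar = 0.
Proof.
apply: enorm_eq0; apply/eqP; rewrite eq_le enorm_ge0 andbT.
rewrite leNgt; apply/negP => c0; set c := enorm (grad f xbar) in c0.
have e0 := eps_pos 0; have r0 := r_pos 0.
have B0 : 0 < r 0 + 2 * eps 0 by lra.
have e1 : 0 < c / 2 / (r 0 + 2 * eps 0) by apply: divr_gt0 => //; apply: divr_gt0.
have mu0 : 0 < mu by case/andP: hmu.
have th0 : 0 < theta by case/andP: hth.
have mu1 : `|mu| < 1 by rewrite gtr0_norm //; case/andP: hmu.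
have [j _ Hj] := proj1 (cvgrPdist_lt _ _) (cvg_expr mu1) _ e1.
have {Hj} hj : mu ^+ j < c / 2 / (r 0 + 2 * eps 0).
  have := Hj j (leqnn j); rewrite /= sub0r normrN ger0_norm //.
  exact: exprn_ge0 (ltW mu0).
have thj : theta ^+ j <= mu ^+ j by rewrite lerXn2r // ?nnegrE ltW.
have [K HK] := geo infn j.
have c2 : 0 < c / 2 by apply: divr_gt0.
have [del del0 Hd] := cont_enorm (@grad_cont xbar) c2.
have [N2 HN2] := x_near del0.
have [k [Kk nk]] := infn (maxn K N2).
rewrite geq_max in Kk; case/andP: Kk => Kk N2k.
have [_ _ _ gb] := null_facts nk.
have [ek rk] := HK k Kk.
have hd := Hd _ (HN2 k N2k).
have bnd : enorm (grad f (x k)) < c / 2.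
  apply: le_lt_trans gb _.
  have : mu ^+ j * (r 0 + 2 * eps 0) < c / 2 by rewrite -ltr_pdivlMr.
  have : theta ^+ j * eps 0 <= mu ^+ j * eps 0 by rewrite ler_pM2r.
  lra.
have := enorm_tri (grad f xbar) (grad f (x k)) 0.
rewrite !subr0 enormB_sym -/c; lra.
Qed.


Lemma ar9 (a b c e : R) : a <= b -> b < e / 2 -> c < e / 2 -> a + c < e.
Proof. lra. Qed.
Lemma ar10 (a b c e : R) : a <= b + c -> b < e / 2 -> c < e / 2 -> e < a -> False.
Proof. lra. Qed.
Lemma ar4 (a b F1 F0 Fb e : R) : a < b -> F1 <= F0 - b -> Fb <= F1 -> F0 - Fb < e -> a < e.
Proof. lra. Qed.
Lemma ar5 (F0 F1 c : R) : F0 - c < F1 -> - c < F1 - F0.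
Proof. lra. Qed.
Lemma ar6 (a c Q P : R) : - P < a -> c <= - Q -> Q - P < a - c.
Proof. lra. Qed.
Lemma half_lt (a : R) : 0 < a -> a / 2 < a.
Proof. lra. Qed.
Lemma ar7 (D gn a b e : R) : D = gn - e -> gn <= a + b -> b <= e -> D <= a.
Proof. lra. Qed.
Lemma ar8 (D E1 E2 E3 : R) : D <= E1 -> E1 <= E2 + E3 -> E2 < 1 -> D < E3 + 1.
Proof. lra. Qed.

Lemma fin_null N : (forall k, (N <= k)%N -> ~~ null k) -> False.
Proof.
move=> HN.
have cst k : (N <= k)%N -> eps k = eps N /\ r k = r N.
  move=> /subnK <-; elim: (k - N)%N => [|i [IH1 IH2]]; first by rewrite add0n.
  have [rS eS _ _ _] := desc_facts (HN (i + N)%N (leq_addl _ _)).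
  by rewrite addSn rS eS.
have rr0 := r_pos N; set rr := r N in rr0 cst.
have b0 : 0 < beta by case/andP: hbeta.
have b1 : beta < 1 by case/andP: hbeta.
have ga0 : 0 < gamma by case/andP: hgamma.
have ga1 : gamma < 1 by case/andP: hgamma.
set G := enorm (grad f xbar) + 1.
have G0 : 0 < G by rewrite /G (le_lt_trans (enorm_ge0 (grad f xbar))) // ltrDl.
have e1 : 0 < Num.min 1 ((1 - beta) * rr / 2).
  by rewrite lt_min ltr01 /=; apply: divr_gt0 => //; apply: mulr_gt0 => //; rewrite subr_gt0.
have [del del0 Hd] := cont_enorm (@grad_cont xbar) e1.
have del2 : 0 < del / 2 by apply: divr_gt0.
have [N2 HN2] := x_near del2.
set Tm := Num.min 1 (gamma * del / (2 * G)).
have Tm0 : 0 < Tm.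
  rewrite lt_min ltr01 /=; apply: divr_gt0; [exact: mulr_gt0| exact: mulr_gt0].
have e3 : 0 < beta * rr ^+ 2 * Tm by rewrite mulr_gt0 // mulr_gt0 // exprn_gt0.
have [N3 HN3] := f_lim e3.
set K := maxn N (maxn N2 N3).
have NK : (N <= K)%N by rewrite leq_maxl.
have N2K : (N2 <= K)%N by rewrite /K (leq_trans (leq_maxl N2 N3)) // leq_maxr.
have N3K : (N3 <= K)%N by rewrite /K (leq_trans (leq_maxr N2 N3)) // leq_maxr.
have nK := HN K NK.
have [_ _ dn rd dK] := desc_facts nK.
have [eK rK] := cst K NK.
rewrite rK in rd.
have tK := t_pos K.
have aK := HN3 K N3K.
have desc := descent K.
have fge := f_ge K.+1.
set D := enorm (d K) in dn rd desc.
have D0 : 0 < D by exact: lt_trans rr0 rd.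
have tT : t K < Tm.
  have h1 : beta * t K * rr ^+ 2 < beta * t K * D ^+ 2.
    by rewrite ltr_pM2l ?mulr_gt0 // ltr_pXn2r // ?nnegrE ltW.
  have h2 : beta * t K * rr ^+ 2 < beta * rr ^+ 2 * Tm.
    move: aK; rewrite -/D in h1 *; apply: ar4 h1 desc fge.
  have E : beta * t K * rr ^+ 2 = (beta * rr ^+ 2) * t K by ring.
  by move: h2; rewrite E ltr_pM2l // mulr_gt0 // exprn_gt0.
have t1 : t K < 1 by apply: lt_le_trans tT _; rewrite ge_min lexx.
have t2 : t K < gamma * del / (2 * G) by apply: lt_le_trans tT _; rewrite ge_min lexx orbT.
case: (step K) => _ _; rewrite (negbTE (d_neq0 nK)) => -[j [tj _ Hj]] _.
case: j tj Hj => [|j] tj Hj; first by move: t1; rewrite tj expr0 ltxx.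
set s := gamma ^+ j.
have s0 : 0 < s by rewrite exprn_gt0.
have ts : t K = gamma * s by rewrite tj exprS.
have na := Hj j (ltnSn j); rewrite /armijo -/s in na.
have {}na : f (x K) - beta * s * D ^+ 2 < f (x K + s *: d K) by rewrite ltNge; apply/negP.
have [u /andP[u0 us] mvt] := line_mvt (x K) (d K) (fun y => (proj1 fC1) y) s0.
set xi := x K + u *: d K in mvt.
have h1 : - beta * D ^+ 2 < dot (grad f xi) (d K).
  have : s * (- beta * D ^+ 2) < s * dot (grad f xi) (d K).
    rewrite -mvt (_ : s * (- beta * D ^+ 2) = - (beta * s * D ^+ 2)); last by ring.
    exact: ar5 na.
  by rewrite ltr_pM2l.
have h2 := desc_dir nK; rewrite -/D in h2.
have h3 : (1 - beta) * D ^+ 2 < enorm (grad f xi - grad f (x K)) * D.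
  apply: lt_le_trans (CS _ _); rewrite dotBl.
  rewrite (_ : (1 - beta) * D ^+ 2 = D ^+ 2 - beta * D ^+ 2); last by ring.
  rewrite (_ : - beta * D ^+ 2 = - (beta * D ^+ 2)) in h1; last by ring.
  exact: ar6 h1 h2.
have h4 : (1 - beta) * rr < enorm (grad f xi - grad f (x K)).
  apply: lt_trans (_ : (1 - beta) * rr < (1 - beta) * D) _.
    by rewrite ltr_pM2l // subr_gt0.
  by move: h3; rewrite expr2 mulrA ltr_pM2r.
have xK := HN2 K N2K.
have xK' : enorm (x K - xbar) < del by apply: lt_trans xK _; exact: half_lt.
have := Hd _ xK'; rewrite lt_min => /andP[gK1 gK2].
have DG : D <= enorm (grad f (x K)).
  have := enormD (grad f (x K)) (g K - grad f (x K)); rewrite addrC subrK.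
  move=> h; exact: ar7 dn h (g_close K).
have DG' : D < G.
  have := enorm_tri (grad f (x K)) (grad f xbar) 0; rewrite !subr0 /G => h.
  exact: ar8 DG h gK1.
have sG : s * G < del / 2.
  have : gamma * s < gamma * (del / (2 * G)) by rewrite -ts mulrA.
  rewrite ltr_pM2l // => h; rewrite -ltr_pdivlMr //.
  by apply: lt_le_trans h _; rewrite invfM mulrA.
have uD : u * D <= s * G.
  apply: ler_pM; [exact: ltW | exact: ltW | exact: ltW | exact: ltW].
have xi_near : enorm (xi - xbar) < del.
  apply: le_lt_trans (enorm_tri _ (x K) _) _.
  rewrite /xi addrAC subrr add0r enormZ gtr0_norm //.
  rewrite -/D; exact: ar9 uD sG xK.
have := Hd _ xi_near; rewrite lt_min => /andP[_ gX].
have T := enorm_tri (grad f xi) (grad f xbar) (grad f (x K)).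
rewrite (enormB_sym (grad f xbar)) in T.
exact: ar10 T gX gK2 h4.
Qed.

End Stat.

End Alg.

Unset Implicit Arguments. Set Strict Implicit.

Theorem mainTheorem13 (R : realType) (n : nat) (f : 'rV[R]_n -> R)
  (mu theta beta gamma tau : R) (rho : nat -> R)
  (x g d : nat -> 'rV[R]_n) (eps r t : nat -> R) (xbar : 'rV[R]_n) :
  C1 f ->
  0 < mu < 1 -> 0 < theta < 1 -> theta < mu ->
  0 < beta < 1 -> 0 < gamma < 1 -> 0 < tau < 1 ->
  (forall k, 0 < rho k) -> rho @ \oo --> 0 ->
  IRG_backtracking f mu theta beta gamma tau rho x g d eps r t ->
  accumulation_point x xbar ->
  KL_at f xbar ->
  grad f xbar = 0 /\ x @ \oo --> xbar.
Proof.
move=> fC1 hmu hth thmu hbeta hgamma htau _ _ alg acc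
  [eta [U [psi [eta0 nbU [mono pos intg klU]]]]].
have xc := x_cvg fC1 hmu hth thmu hbeta hgamma htau alg acc eta0 mono pos intg klU nbU.
split => //.
have [H|H] := pselect (forall N, exists k, (N <= k)%N /\ null g eps r k).
  exact: (inf_null fC1 hmu hth thmu alg xc H).
exfalso; move: H => /existsNP [N /forallNP HN].
apply: (fin_null fC1 hmu hth hbeta hgamma htau alg acc xc (N := N)) => k Nk.
by apply/negP => nk; apply: (HN k).
Qed.
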